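(* Let a blockchain computation contain a network split, and let $B_1$ and $B_2$ be branches of the global blockchain tree mined in the two different partitions created by the split. If $B_1$ and $B_2$ have their accounts split on the same seed block, then $B_1$ and $B_2$ are mergeable.
   Context: Peers communicate by message passing; a partition is a set of peers that can communicate. A network split is an action that separates the network into two nonempty partitions; after it, messages are delivered only within the sender's partition. Peers mine transactions into blocks (one transaction per block); each block links to one earlier block, so the collection of all mined blocks (the global blockchain) is a tree rooted at a unique genesis block. A branch is a chain of blocks from the genesis to a leaf. A transaction transfers funds from one source account to one target account. The balance of an account $a$ with respect to a block $b$ is the total of funds transferred into $a$ minus the total transferred out of $a$ by the transactions on the chain from the genesis to $b$. A transaction is valid (with respect to a chain) if applying it leaves the source account with nonnegative balance. A seed is the last block mined on a branch before the split. At a split, the accounts are split in a seed: each account's balance at the seed is divided between the two partitions into nonnegative shares summing to the balance at the seed, and post-split blocks in each partition are validated against that partition's share. A transaction is confirmed if it lies on a permanent (infinite) branch and rejected otherwise. A branch merge of two branches is an arbitrary interleaving of their transactions that preserves the order of transactions of each branch. Two branches are mergeable if all transactions mined before the split are resolved (confirmed/rejected) identically by both, and every branch merge of them keeps every transaction of the two branches valid. *)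

(* Defs.v *)
From HB Require Import structures.
From mathcomp Require Import all_boot all_order all_algebra.
Set Implicit Arguments. Unset Strict Implicit. Unset Printing Implicit Defensive.
Import Order.TTheory GRing.Theory Num.Theory.
Local Open Scope ring_scope.

Record tx (A : Type) := Tx { src : A; tgt : A; amt : nat }.

Definition flow (A : eqType) (a : A) (t : tx A) : int :=
  (if tgt t == a then (amt t)%:Z else 0) - (if src t == a then (amt t)%:Z else 0).

Definition bal_from (A : eqType) (b : A -> int) (s : seq (tx A)) (a : A) : int :=
  b a + \sum_(u <- s) flow a u.

Definition valid_from (A : eqType) (b : A -> int) (s : seq (tx A)) : Prop :=
  forall p t q, s = p ++ t :: q -> 0 <= bal_from b (rcons p t) (src t).

Inductive interleave (T : Type) : seq T -> seq T -> seq T -> Prop :=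
| il_nil : interleave [::] [::] [::]
| il_l x s1 s2 m : interleave s1 s2 m -> interleave (x :: s1) s2 (x :: m)
| il_r x s1 s2 m : interleave s1 s2 m -> interleave s1 (x :: s2) (x :: m).

(* Blocks form a tree via
   [parent] (each block links to one earlier block), rooted at [genesis].
   [pre_split b] : block b was mined before the split; blocks mined before
   the split only link to blocks mined before the split.
   [part1 b] : a post-split block b was mined in the first partition
   (otherwise in the second one). [endow] are the genesis funds. *)
Record computation (A : eqType) := Computation {
  blk : eqType;
  genesis : blk;
  parent : blk -> option blk;
  txof : blk -> tx A;
  endow : A -> nat;
  pre_split : pred blk;
  part1 : pred blk;
  genesis_root : parent genesis = None;
  genesis_pre : pre_split genesis;
  pre_closed : forall b b', parent b = Some b' -> pre_split b -> pre_split b'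
}.

Arguments pre_split [A] c _.
Arguments part1 [A] c _.

Section Chains.
Variables (A : eqType) (C : computation A).

Definition is_chain (c : seq (blk C)) : Prop :=
  path (fun x y => parent y == Some x) (genesis C) c.

Definition is_leaf (b : blk C) : Prop := forall b', parent b' <> Some b.

(* A branch: a chain from the genesis to a leaf (represented by the list of
   non-genesis blocks). *)
Definition is_branch (c : seq (blk C)) : Prop :=
  is_chain c /\ is_leaf (last (genesis C) c).

Definition on_branch (c : seq (blk C)) (b : blk C) : bool := b \in genesis C :: c.

(* Transactions of a chain (the genesis carries the endowment instead). *)
Definition pre_txs (c : seq (blk C)) : seq (tx A) :=
  map (@txof _ C) (filter (pre_split C) c).
Definition post_txs (c : seq (blk C)) : seq (tx A) :=
  map (@txof _ C) (filter (predC (pre_split C)) c).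

Definition seed (c : seq (blk C)) : blk C :=
  last (genesis C) (filter (pre_split C) c).

Definition endow_int (a : A) : int := (endow C a)%:Z.

Definition balance_at (b : blk C) (a : A) (bl : int) : Prop :=
  exists c, [/\ is_chain c, last (genesis C) c = b &
                bl = bal_from endow_int (map (@txof _ C) c) a].

Definition split_in (s : blk C) (sh1 sh2 : A -> int) : Prop :=
  forall a bl, balance_at s a bl -> [/\ 0 <= sh1 a, 0 <= sh2 a & sh1 a + sh2 a = bl].

Definition mined_valid (c : seq (blk C)) (sh : A -> int) : Prop :=
  valid_from endow_int (pre_txs c) /\ valid_from sh (post_txs c).

(* Mergeability: pre-split blocks resolved identically, and every branch merge
   (common pre-split part followed by an arbitrary order-preserving
   interleaving of the post-split transactions) keeps every transaction valid. *)
Definition mergeable (c1 c2 : seq (blk C)) : Prop :=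
  (forall b, pre_split C b -> on_branch c1 b = on_branch c2 b) /\
  forall m, interleave (post_txs c1) (post_txs c2) m ->
    valid_from endow_int (pre_txs c1 ++ m).

End Chains.

(* Main.v *)
Require Import Defs.
From HB Require Import structures.
From mathcomp Require Import all_boot all_order all_algebra.
From mathcomp Require Import ring lra.
Set Implicit Arguments. Unset Strict Implicit. Unset Printing Implicit Defensive.
Import Order.TTheory GRing.Theory Num.Theory.
Local Open Scope ring_scope.

Lemma prefix_nonneg (A : eqType) (b : A -> int) (s : seq (tx A)) (a : A) :
  valid_from b s -> 0 <= b a -> forall p q, s = p ++ q -> 0 <= bal_from b p a.
Proof.
move=> V ha p; elim/last_ind: p => [|p t IH] q E.
  by rewrite /bal_from big_nil addr0.
have [st|nst] := eqVneq (src t) a.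
  rewrite -st; apply: (V p t q); by rewrite E cat_rcons.
have := IH (t :: q); rewrite -cat_rcons => /(_ E).
rewrite /bal_from -cats1 big_cat big_seq1 /flow (negbTE nst) subr0 => h.
rewrite addrA; apply: addr_ge0 => //; by case: ifP.
Qed.

Lemma interleave_prefix (T : Type) (f : T -> int) s1 s2 m :
  interleave s1 s2 m -> forall k, exists p1 q1 p2 q2,
    [/\ s1 = p1 ++ q1, s2 = p2 ++ q2 &
     \sum_(u <- take k m) f u = \sum_(u <- p1) f u + \sum_(u <- p2) f u].
Proof.
elim=> [|x {}s1 {}s2 {}m _ IH|x {}s1 {}s2 {}m _ IH] k.
- by exists [::], [::], [::], [::]; rewrite !big_nil addr0.
- case: k => [|k].
    by exists [::], (x :: s1), [::], s2; rewrite /= !big_nil addr0.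
  have [p1 [q1 [p2 [q2 [-> -> E]]]]] := IH k.
  exists (x :: p1), q1, p2, q2; split => //=.
  by rewrite !big_cons E addrA.
- case: k => [|k].
    by exists [::], s1, [::], (x :: s2); rewrite /= !big_nil addr0.
  have [p1 [q1 [p2 [q2 [-> -> E]]]]] := IH k.
  exists p1, q1, (x :: p2), q2; split => //=.
  by rewrite !big_cons E addrCA.
Qed.

Lemma cat_split (T : Type) (s m p q : seq T) t :
  s ++ m = p ++ t :: q ->
  (exists q', s = p ++ t :: q') \/ (exists m', p = s ++ m' /\ m = m' ++ t :: q).
Proof.
elim: s p => [|x s IH] p /=.
  by move=> ->; right; exists p.
case: p => [|y p] /= [-> E]; first by left; exists s.
case: (IH p E) => [[q' ->]|[m' [-> ->]]]; first by left; exists q'.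
by right; exists m'.
Qed.

Lemma path_allnot (T : Type) (R : rel T) (P : pred T) x c :
  (forall x y, R x y -> P y -> P x) -> path R x c -> ~~ P x -> all (predC P) c.
Proof.
move=> HR; elim: c x => [|y c IH] x //= /andP[Rxy pc] nPx.
have nPy : ~~ P y by apply/negP => Py; move/negP: nPx; apply; exact: HR Rxy Py.
by rewrite /= nPy (IH y).
Qed.

Lemma path_prefix (T : Type) (R : rel T) (P : pred T) x c :
  (forall x y, R x y -> P y -> P x) -> path R x c ->
  c = filter P c ++ filter (predC P) c.
Proof.
move=> HR; elim: c x => [|y c IH] x //= /andP[Rxy pc].
case: ifP => Py /=.
  by rewrite -(IH y pc).
have H := path_allnot HR pc (negbT Py).
suff [-> ->] : filter P c = [::] /\ filter (predC P) c = c by [].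
elim: c {IH pc} H => [|z c IHc] //= /andP[nz /IHc [-> ->]].
by rewrite /= in nz; rewrite (negbTE nz).
Qed.

Lemma chain_unique (A : eqType) (C : computation A) (p1 p2 : seq (blk C)) :
  is_chain p1 -> is_chain p2 -> last (genesis C) p1 = last (genesis C) p2 -> p1 = p2.
Proof.
elim/last_ind: p1 p2 => [|p1 y1 IH] p2; case/lastP: p2 => [|p2 y2] //=;
  rewrite /is_chain ?rcons_path ?last_rcons.
- move=> _ /andP[_ /eqP h] E; by rewrite -E genesis_root in h.
- move=> /andP[_ /eqP h] _ E; by rewrite E genesis_root in h.
move=> /andP[c1 /eqP h1] /andP[c2 /eqP h2] E; subst y2.
rewrite h1 in h2; case: h2 => /(IH _ c1 c2) ->//.
Qed.

Theorem proposition1 (A : eqType) (C : computation A)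
    (c1 c2 : seq (blk C)) (sh1 sh2 : A -> int) :
  is_branch c1 -> is_branch c2 ->
  (* B1 mined (after the split) in the first partition, B2 in the second *)
  (forall b, b \in c1 -> ~~ pre_split C b -> part1 C b) ->
  (forall b, b \in c2 -> ~~ pre_split C b -> ~~ part1 C b) ->
  (* both branches have their accounts split on the same seed s *)
  seed c1 = seed c2 ->
  split_in (seed c1) sh1 sh2 ->
  mined_valid c1 sh1 -> mined_valid c2 sh2 ->
  mergeable c1 c2.
Proof.
move=> [ch1 _] [ch2 _] _ _ Es Hsp [V1 W1] [V2 W2].
have HR : forall x y : blk C, (fun x y => parent y == Some x) x y ->
    pre_split C y -> pre_split C x.
  by move=> x y /eqP h; apply: pre_closed h.
have prech : forall c, is_chain c -> is_chain (filter (pre_split C) c).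
  move=> c ch; have := ch; rewrite /is_chain {1}(path_prefix HR ch) cat_path.
  by case/andP.
split.
  have Ef : filter (pre_split C) c1 = filter (pre_split C) c2.
    by apply: chain_unique; [exact: prech|exact: prech|exact: Es].
  move=> b Pb; have e : forall c, (b \in c) = (b \in filter (pre_split C) c).
    by move=> c; rewrite mem_filter Pb.
  by rewrite /on_branch !inE e [b \in c2]e Ef.
move=> m Hm p t q E.
case: (cat_split E) => [[q' Eq]|[m' [Ep Em]]]; first exact: V1 Eq.
subst p; set a := src t.
have Ht : rcons m' t = take (size m').+1 m.
  by rewrite Em take_cat ltnNge leqnSn /= subSnn /= take0 cats1.
rewrite rcons_cat /bal_from big_cat Ht.
have [p1 [q1 [p2 [q2 [E1 E2 Es']]]]] := interleave_prefix (flow a) Hm (size m').+1.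
rewrite Es'.
have Hb : balance_at (seed c1) a (bal_from (endow_int C) (pre_txs c1) a).
  by exists (filter (pre_split C) c1); split => //; apply: prech.
have [h1 h2 hs] := Hsp _ _ Hb.
have g1 := prefix_nonneg W1 h1 E1.
have g2 := prefix_nonneg W2 h2 E2.
move: hs g1 g2; rewrite /bal_from /=.
lra.
Qed.
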